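(* Let $k$ be an integer and $\mathcal{H}$ a hypergraph on $n$ vertices. Then $Tr(\hat{\mathcal{H}}_{k})=\{T\cup\{x\}\mid T\in Tr(\mathcal{H}),\ |T|<n-k+1\}\cup\mathcal{J}$, where $\mathcal{J}$ contains only sets of size at least $n-k+1$.
   Context: For a hypergraph $\mathcal{H}$ with vertex set $V(\mathcal{H})$ ($|V(\mathcal{H})|=n$) and hyperedge set $\mathcal{E}(\mathcal{H})$, $\hat{\mathcal{H}}_{k}$ is the hypergraph with vertex set $V(\mathcal{H})\cup\{x\}$, $x$ a new vertex, and hyperedge set $\mathcal{E}(\mathcal{H})\cup\{X\cup\{x\}\mid X\subseteq V(\mathcal{H}),\ |X|=k\}$. $Tr(\cdot)$ denotes the hypergraph of inclusion-minimal transversals (vertex sets meeting every hyperedge). *)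

(* Defs.v *)
From mathcomp Require Import all_boot.
Set Implicit Arguments. Unset Strict Implicit. Unset Printing Implicit Defensive.

Definition is_transversal (T : finType) (E : {set {set T}}) (S : {set T}) : bool :=
  [forall e in E, e :&: S != set0].

Definition Tr (T : finType) (E : {set {set T}}) : {set {set T}} :=
  [set S | minset (is_transversal E) S].

(* hat H_k on vertex set option T, the new vertex x being None *)
Definition hatH (T : finType) (E : {set {set T}}) (k : nat) : {set {set option T}} :=
  [set (@Some T) @: e | e : {set T} in E] :|:
  [set ((@Some T) @: X) :|: [set None] | X : {set T} in [set X : {set T} | #|X| == k]].

(* Main.v *)
Require Import Defs.
From mathcomp Require Import all_boot.
Set Implicit Arguments. Unset Strict Implicit. Unset Printing Implicit Defensive.

Lemma sub_card (T : finType) (A : {set T}) m :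
  m <= #|A| -> exists X : {set T}, X \subset A /\ #|X| = m.
Proof.
elim: m => [|m IH] H; first by exists set0; rewrite sub0set cards0.
have [X [XA cX]] := IH (ltnW H).
have : A :\: X != set0.
  apply/eqP=> E0; move: H; rewrite -cX.
  have : A \subset X by rewrite -setD_eq0 E0.
  by move=> AX; rewrite ltnNge subset_leq_card.
case/set0Pn=> a; rewrite inE => /andP[aX aA].
exists (a |: X); rewrite cardsU1 aX cX; split=> //.
by rewrite subUset sub1set aA.
Qed.

Definition pre (T : finType) (S : {set option T}) : {set T} := [set t | Some t \in S].

Lemma pre_img (T : finType) (X : {set T}) : pre (Some @: X) = X.
Proof.
by apply/setP=> t; rewrite inE mem_imset //; exact: Some_inj.
Qed.

Lemma pre_imgN (T : finType) (X : {set T}) : pre (None |: (Some @: X)) = X.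
Proof. by apply/setP=> t; rewrite !inE /= mem_imset //; exact: Some_inj. Qed.

Lemma decN (T : finType) (S : {set option T}) : None \notin S -> S = Some @: pre S.
Proof.
move=> NS; apply/setP=> [[t|]]; last by rewrite (negbTE NS); apply/esym/imsetP=> [[]].
by rewrite mem_imset ?inE //; exact: Some_inj.
Qed.

Lemma decS (T : finType) (S : {set option T}) : None \in S -> S = None |: (Some @: pre S).
Proof.
move=> NS; apply/setP=> [[t|]]; last by rewrite !inE NS.
rewrite !inE /=; apply/idP/imsetP=> [h|[u]]; first by exists t; rewrite ?inE.
by rewrite inE => h [->].
Qed.

Lemma transP (T : finType) (E : {set {set T}}) k (S : {set option T}) :
  Defs.is_transversal (hatH E k) S =
  Defs.is_transversal E (pre S) &&
  ((None \in S) || [forall X : {set T}, (#|X| == k) ==> (X :&: pre S != set0)]).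
Proof.
apply/idP/idP.
- move/forallP=> H; apply/andP; split.
    apply/forallP=> e; apply/implyP=> eE.
    have := H (Some @: e).
    have -> : (Some @: e) \in hatH E k by rewrite in_setU; apply/orP; left; apply/imsetP; exists e.
    move=> /= /set0Pn[[t|]]; rewrite inE => /andP[h1 h2].
      by apply/set0Pn; exists t; rewrite !inE h2 andbT; move: h1; rewrite mem_imset //; exact: Some_inj.
    by case/imsetP: h1.
  case NS: (None \in S) => //=.
  apply/forallP=> X; apply/implyP=> cX.
  have := H ((Some @: X) :|: [set None]).
  have -> : (Some @: X) :|: [set None] \in hatH E k.
    by rewrite in_setU; apply/orP; right; apply/imsetP; exists X; rewrite ?inE.
  move=> /= /set0Pn[[t|]]; rewrite !inE.
    move=> /andP[/orP[h1|//] h2]; apply/set0Pn; exists t; rewrite !inE h2 andbT; move: h1; rewrite mem_imset //; exact: Some_inj.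
  by rewrite NS andbF.
- case/andP=> /forallP HE H2; apply/forallP=> e; apply/implyP.
  rewrite /hatH in_setU => /orP[/imsetP[e' e'E ->]|/imsetP[X]].
    have := HE e'; rewrite e'E /= => /set0Pn[t]; rewrite !inE => /andP[h1 h2].
    by apply/set0Pn; exists (Some t); rewrite inE h2 andbT; apply/imsetP; exists t.
  rewrite inE => cX ->.
  case/orP: H2 => [NS|/forallP/(_ X)]; first by apply/set0Pn; exists None; rewrite !inE NS orbT.
  rewrite cX /= => /set0Pn[t]; rewrite !inE => /andP[h1 h2].
  by apply/set0Pn; exists (Some t); rewrite !inE h2 andbT; apply/orP; left; apply/imsetP; exists t.
Qed.

Lemma avoid (T : finType) (T' : {set T}) k :
  #|T'| + k <= #|T| -> exists X : {set T}, #|X| = k /\ X :&: T' = set0.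
Proof.
move=> H; have : k <= #|~: T'| by rewrite cardsCs setCK leq_subRL ?max_card // addnC.
case/sub_card=> X [XC cX]; exists X; split=> //.
by apply/setP=> t; rewrite !inE; case: (boolP (t \in X)) => //= /(subsetP XC); rewrite inE => /negbTE.
Qed.

Theorem proposition5 (T : finType) (n k : nat) (E : {set {set T}}) :
  #|T| = n ->
  exists J : {set {set option T}},
    (forall S, S \in J -> n + 1 <= #|S| + k) /\
    Tr (hatH E k) =
      [set ((@Some T) @: S) :|: [set None] | S : {set T} in [set S in Tr E | #|S| + k <= n]] :|: J.
Proof.
move=> cT.
exists [set S in Tr (hatH E k) | n + 1 <= #|S| + k]; split.
  by move=> S; rewrite inE => /andP[].
apply/setP=> S; rewrite in_setU [in RHS]inE.
apply/idP/idP.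
- move=> STr; rewrite STr /=.
  case: (leqP (n + 1) (#|S| + k)) => [_|lt]; first by rewrite orbT.
  rewrite orbF; move: STr; rewrite /Tr inE => /minsetP[tS minS].
  have cS : #|S| + k <= n by move: lt; rewrite addn1 ltnS.
  case NS: (None \in S); last first.
    move: tS; rewrite transP NS /= => /andP[_ /forallP H].
    have cP : #|pre S| = #|S| by rewrite {2}(decN (negbT NS)) card_imset //; apply: Some_inj.
    have hh : #|pre S| + k <= #|T| by rewrite cP cT.
    have [X [cX XP]] := avoid hh.
    by have := H X; rewrite cX eqxx XP eqxx.
  have eS := decS NS.
  have cP : #|S| = (#|pre S|).+1.
    by rewrite {1}eS cardsU1 card_imset; [rewrite (_ : None \notin _) //; apply/imsetP=> [[]]|exact: Some_inj].
  apply/imsetP; exists (pre S); last by rewrite setUC -eS.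
  rewrite !inE; apply/andP; split; last by apply: leq_trans cS; rewrite cP addSn.
  apply/minsetP; split; first by move: tS; rewrite transP => /andP[].
  move=> B tB BP.
  have : None |: (Some @: B) = S.
    apply: minS; first by rewrite transP pre_imgN tB setU11.
    rewrite {1}eS; apply: setUS; exact: imsetS.
  by move=> e; rewrite -[B]pre_imgN e.
- case/orP=> [/imsetP[T' ] |]; last by rewrite inE => /andP[].
  rewrite !inE => /andP[TT cT'] ->.
  move: TT => /minsetP[tT minT].
  rewrite setUC; apply/minsetP; split; first by rewrite transP pre_imgN tT setU11.
  move=> B tB BS.
  have pB : pre B \subset T'.
    apply/subsetP=> t; rewrite inE => h; move/subsetP: BS => /(_ _ h).
    by rewrite !inE /= mem_imset //; exact: Some_inj.
  move: tB; rewrite transP => /andP[tPB].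
  have eB := minT _ tPB pB.
  case NB: (None \in B) => /=.
    by move=> _; rewrite (decS NB) eB.
  move/forallP=> H.
  have hh : #|T'| + k <= #|T| by rewrite cT.
  have [X [cX XP]] := avoid hh.
  by have := H X; rewrite cX eqxx eB XP eqxx.
Qed.
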